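(* Let $(\mu,u)$ be a classical structure on $A$ with spiders $\Xi_n^m$ and classical channel $C_\Xi$, and let $H:A\to A$ be a complementary endomorphism for it. Then: (i) for every normalized pure classical element $e:\mathrm I\to A$, $C_\Xi\circ H\circ e=\bot_A$; (ii) $C_\Xi\circ H\circ C_\Xi=\bot_A\circ\top_A$.
   Context: Setting. $\mathbf C$ is a strict symmetric monoidal category with monoidal unit $\mathrm I$, symmetry $\sigma$, and a dagger functor $(-)^\dagger$ (identity on objects, contravariant, involutive, strict monoidal). $\mathbf C^{pure}$ is a subcategory of $\mathbf C$ with the same objects, closed under $\otimes$ and $\dagger$, containing identities, symmetries and the maps $\eta_A$ below. Every object $A$ is self-dual: there is $\eta_A:\mathrm I\to A\otimes A$ in $\mathbf C^{pure}$ with $\epsilon_A:=\eta_A^\dagger$, $(\epsilon_A\otimes 1_A)\circ(1_A\otimes\eta_A)=1_A$ and $\sigma_{A,A}\circ\eta_A=\eta_A$. A morphism $U$ is unitary if $U^\dagger\circ U=1$ and $U\circ U^\dagger=1$. Environment structure: a family of morphisms $\top_A:A\to\mathrm I$ in $\mathbf C$ such that (E1) for all objects $A,B$ and all $f,g\in\mathbf C^{pure}(A,B)$: $f^\dagger\circ f=g^\dagger\circ g$ if and only if $\top_B\circ f=\top_B\circ g$; (E2) $\top_{A\otimes B}=\top_A\otimes\top_B$; (E3) $(1_A\otimes\top_A)\circ\eta_A=\bot_A$, where $\bot_A:=\top_A^\dagger:\mathrm I\to A$. An element $\psi:\mathrm I\to A$ is normalized if $\top_A\circ\psi=1_{\mathrm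 I}$. Classical structure on $A$: morphisms $\mu:A\otimes A\to A$ and $u:\mathrm I\to A$ in $\mathbf C^{pure}$, with $\delta:=\mu^\dagger$, such that $\mu$ is associative with unit $u$, $\mu\circ\sigma_{A,A}=\mu$, $(1_A\otimes\mu)\circ(\delta\otimes 1_A)=\delta\circ\mu$, $\mu\circ\delta=1_A$, and $\eta_A=\delta\circ u$. Spiders: $\mu_0:=u$, $\mu_1:=1_A$, $\mu_{k+1}:=\mu\circ(\mu_k\otimes 1_A)$, and $\Xi_n^m:=\mu_m^\dagger\circ\mu_n:A^{\otimes n}\to A^{\otimes m}$. A pure classical element is $e:\mathrm I\to A$ in $\mathbf C^{pure}$ with $\Xi_1^2\circ e=e\otimes e$. The classical channel is $C_\Xi:=(1_A\otimes\top_A)\circ\Xi_1^2:A\to A$. Complementary endomorphism: $H:A\to A$ in $\mathbf C^{pure}$ with $(H\otimes 1_A)\circ\eta_A=(1_A\otimes H)\circ\eta_A$, $H^\dagger=H$, $H$ unitary, and $\Xi_2^1\circ(H\otimes H)\circ\Xi_1^2=\Xi_0^1\circ\Xi_1^0$ (i.e. $\mu\circ(H\otimes H)\circ\delta=u\circ u^\dagger$). *)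

(* Defs.v *)
(* Morphisms are a single type with dom/cod maps (an
   "arrows-only" presentation), so that strictness of the monoidal
   structure ((A⊗B)⊗C = A⊗(B⊗C), I⊗A = A = A⊗I, and the same for
   morphisms) can be stated as plain equalities without casts.
   [comp g f] is g ∘ f; it is only meaningful when cod f = dom g. *)

Set Implicit Arguments.
Unset Strict Implicit.

Record DSMC := {
  Ob : Type;
  Mor : Type;
  dom : Mor -> Ob;
  cod : Mor -> Ob;
  idm : Ob -> Mor;
  comp : Mor -> Mor -> Mor;
  Iob : Ob;
  ten : Ob -> Ob -> Ob;
  tenm : Mor -> Mor -> Mor;
  sym : Ob -> Ob -> Mor;
  dag : Mor -> Mor;
  dom_id : forall A, dom (idm A) = A;
  cod_id : forall A, cod (idm A) = A;
  dom_comp : forall f g, cod f = dom g -> dom (comp g f) = dom f;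
  cod_comp : forall f g, cod f = dom g -> cod (comp g f) = cod g;
  comp_idl : forall f, comp (idm (cod f)) f = f;
  comp_idr : forall f, comp f (idm (dom f)) = f;
  comp_assoc : forall f g h, cod f = dom g -> cod g = dom h ->
      comp h (comp g f) = comp (comp h g) f;
  ten_assoc : forall A B C, ten (ten A B) C = ten A (ten B C);
  ten_unitl : forall A, ten Iob A = A;
  ten_unitr : forall A, ten A Iob = A;
  dom_tenm : forall f g, dom (tenm f g) = ten (dom f) (dom g);
  cod_tenm : forall f g, cod (tenm f g) = ten (cod f) (cod g);
  tenm_id : forall A B, tenm (idm A) (idm B) = idm (ten A B);
  tenm_comp : forall f f' g g', cod f = dom f' -> cod g = dom g' ->
      tenm (comp f' f) (comp g' g) = comp (tenm f' g') (tenm f g);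
  tenm_assoc : forall f g h, tenm (tenm f g) h = tenm f (tenm g h);
  tenm_unitl : forall f, tenm (idm Iob) f = f;
  tenm_unitr : forall f, tenm f (idm Iob) = f;
  dom_sym : forall A B, dom (sym A B) = ten A B;
  cod_sym : forall A B, cod (sym A B) = ten B A;
  sym_nat : forall f g,
      comp (sym (cod f) (cod g)) (tenm f g) = comp (tenm g f) (sym (dom f) (dom g));
  sym_inv : forall A B, comp (sym B A) (sym A B) = idm (ten A B);
  sym_hex : forall A B C,
      sym A (ten B C) = comp (tenm (idm B) (sym A C)) (tenm (sym A B) (idm C));
  dom_dag : forall f, dom (dag f) = cod f;
  cod_dag : forall f, cod (dag f) = dom f;
  dag_id : forall A, dag (idm A) = idm A;
  dag_comp : forall f g, cod f = dom g -> dag (comp g f) = comp (dag f) (dag g);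
  dag_dag : forall f, dag (dag f) = f;
  dag_tenm : forall f g, dag (tenm f g) = tenm (dag f) (dag g)
}.

Arguments Iob : clear implicits.

Section Defs.
Variable C : DSMC.
Notation Ob := (Ob C).
Notation Mor := (Mor C).

Definition pure_subcat (pure : Mor -> Prop) (eta : Ob -> Mor) : Prop :=
  (forall A, pure (idm A)) /\
  (forall f g, cod f = dom g -> pure f -> pure g -> pure (comp g f)) /\
  (forall f g, pure f -> pure g -> pure (tenm f g)) /\
  (forall f, pure f -> pure (dag f)) /\
  (forall A B, pure (sym A B)) /\
  (forall A, pure (eta A)).

Definition eps (eta : Ob -> Mor) (A : Ob) : Mor := dag (eta A).

Definition self_dual (eta : Ob -> Mor) : Prop :=
  forall A, dom (eta A) = Iob C /\ cod (eta A) = ten A A /\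
    comp (tenm (eps eta A) (idm A)) (tenm (idm A) (eta A)) = idm A /\
    comp (sym A A) (eta A) = eta A.

Definition bot (top : Ob -> Mor) (A : Ob) : Mor := dag (top A).

Definition environment (pure : Mor -> Prop) (eta top : Ob -> Mor) : Prop :=
  (forall A, dom (top A) = A /\ cod (top A) = Iob C) /\
  (* (E1) *)
  (forall A B f g, pure f -> pure g ->
     dom f = A -> cod f = B -> dom g = A -> cod g = B ->
     (comp (dag f) f = comp (dag g) g <-> comp (top B) f = comp (top B) g)) /\
  (* (E2) *)
  (forall A B, top (ten A B) = tenm (top A) (top B)) /\
  (* (E3) *)
  (forall A, comp (tenm (idm A) (top A)) (eta A) = bot top A).

Definition normalized (top : Ob -> Mor) (A : Ob) (psi : Mor) : Prop :=
  comp (top A) psi = idm (Iob C).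

Definition classical_structure (pure : Mor -> Prop) (eta : Ob -> Mor)
    (A : Ob) (mu u : Mor) : Prop :=
  pure mu /\ pure u /\
  dom mu = ten A A /\ cod mu = A /\ dom u = Iob C /\ cod u = A /\
  comp mu (tenm mu (idm A)) = comp mu (tenm (idm A) mu) /\
  comp mu (tenm u (idm A)) = idm A /\
  comp mu (tenm (idm A) u) = idm A /\
  comp mu (sym A A) = mu /\
  comp (tenm (idm A) mu) (tenm (dag mu) (idm A)) = comp (dag mu) mu /\
  comp mu (dag mu) = idm A /\
  eta A = comp (dag mu) u.

Fixpoint smu (A : Ob) (mu u : Mor) (n : nat) : Mor :=
  match n with
  | O => u
  | S O => idm A
  | S k => comp mu (tenm (smu A mu u k) (idm A))
  end.

Definition Xi (A : Ob) (mu u : Mor) (n m : nat) : Mor :=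
  comp (dag (smu A mu u m)) (smu A mu u n).

Definition chan (top : Ob -> Mor) (A : Ob) (mu u : Mor) : Mor :=
  comp (tenm (idm A) (top A)) (Xi A mu u 1 2).

Definition pure_classical_element (pure : Mor -> Prop) (A : Ob) (mu u e : Mor) : Prop :=
  pure e /\ dom e = Iob C /\ cod e = A /\
  comp (Xi A mu u 1 2) e = tenm e e.

Definition unitary (U : Mor) : Prop :=
  comp (dag U) U = idm (dom U) /\ comp U (dag U) = idm (cod U).

Definition complementary (pure : Mor -> Prop) (eta : Ob -> Mor)
    (A : Ob) (mu u H : Mor) : Prop :=
  pure H /\ dom H = A /\ cod H = A /\
  comp (tenm H (idm A)) (eta A) = comp (tenm (idm A) H) (eta A) /\
  dag H = H /\ unitary H /\
  comp (Xi A mu u 2 1) (comp (tenm H H) (Xi A mu u 1 2))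
    = comp (Xi A mu u 0 1) (Xi A mu u 1 0).

End Defs.

(* Main.v *)
Require Import Defs.
From Stdlib Require Import Setoid.

Lemma idl (C : DSMC) (f : Mor C) Y : cod f = Y -> comp (idm Y) f = f.
Proof. intros <-; apply comp_idl. Qed.
Lemma idr (C : DSMC) (f : Mor C) X : dom f = X -> comp f (idm X) = f.
Proof. intros <-; apply comp_idr. Qed.


Lemma ichL (C : DSMC) (f g : Mor C) X Y : dom f = X -> cod g = Y ->
  comp (tenm f (idm Y)) (tenm (idm X) g) = tenm f g.
Proof.
  intros <- <-. rewrite <- tenm_comp by (rewrite ?dom_id, ?cod_id; reflexivity).
  rewrite comp_idr, comp_idl. reflexivity.
Qed.
Lemma ichR (C : DSMC) (f g : Mor C) X Y : cod f = Y -> dom g = X ->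
  comp (tenm (idm Y) g) (tenm f (idm X)) = tenm f g.
Proof.
  intros <- <-. rewrite <- tenm_comp by (rewrite ?dom_id, ?cod_id; reflexivity).
  rewrite comp_idr, comp_idl. reflexivity.
Qed.
Lemma t1c (C : DSMC) (f g : Mor C) X : cod g = dom f ->
  tenm (idm X) (comp f g) = comp (tenm (idm X) f) (tenm (idm X) g).
Proof.
  intros h. rewrite <- tenm_comp by (rewrite ?dom_id, ?cod_id; auto).
  rewrite (idr _ (idm X)) by (apply dom_id). reflexivity.
Qed.
Lemma tc1 (C : DSMC) (f g : Mor C) X : cod g = dom f ->
  tenm (comp f g) (idm X) = comp (tenm f (idm X)) (tenm g (idm X)).
Proof.
  intros h. rewrite <- tenm_comp by (rewrite ?dom_id, ?cod_id; auto).
  rewrite (idr _ (idm X)) by (apply dom_id). reflexivity.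
Qed.
Lemma rw2 (C : DSMC) (f g h r : Mor C) : comp g f = h -> cod r = dom f -> cod f = dom g ->
  comp g (comp f r) = comp h r.
Proof. intros <- h1 h2. apply comp_assoc; auto. Qed.

Ltac ob :=
  repeat first
    [ rewrite dom_tenm | rewrite cod_tenm | rewrite dom_id | rewrite cod_id
    | rewrite dom_dag | rewrite cod_dag | rewrite dom_sym | rewrite cod_sym
    | rewrite dom_comp by ob | rewrite cod_comp by ob
    | match goal with
      | h : dom ?f = _ |- context [dom ?f] => rewrite h
      | h : cod ?f = _ |- context [cod ?f] => rewrite h
      | h : forall x, dom (?f x) = _ |- context [dom (?f _)] => rewrite h
      | h : forall x, cod (?f x) = _ |- context [cod (?f _)] => rewrite h
      end ];
  repeat first [rewrite ten_assoc | rewrite ten_unitl | rewrite ten_unitr];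
  reflexivity.

Theorem mainTheorem2 (C : DSMC) (pure : Mor C -> Prop) (eta top : Ob C -> Mor C)
    (A : Ob C) (mu u H : Mor C) :
  pure_subcat pure eta ->
  self_dual eta ->
  environment pure eta top ->
  classical_structure pure eta A mu u ->
  complementary pure eta A mu u H ->
  (forall e : Mor C, pure_classical_element pure A mu u e -> normalized top A e ->
     comp (chan top A mu u) (comp H e) = bot top A) /\
  comp (chan top A mu u) (comp H (chan top A mu u)) = comp (bot top A) (top A).
Proof.
  intros [Pid [Pcomp [Pten [Pdag [Psym Peta]]]]] SD [Htyp [E1 [E2 E3]]]
    [Pmu [Pu [Hdmu [Hcmu [Hdu [Hcu [Hassoc [Hunl [Hunr [Hcommu [Hfrob [Hspec Heta]]]]]]]]]]]]
    [PH [HdH [HcH [HHeta [HdagH [[HU1 HU2] Hcompl]]]]]].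
  assert (Hdt : forall X, dom (top X) = X) by (intro X; apply Htyp).
  assert (Hct : forall X, cod (top X) = Iob C) by (intro X; apply Htyp).
  destruct (SD A) as [Hde [Hce [Hsnake Hsymeta]]].
  clear Htyp.
  assert (X12 : Xi A mu u 1 2 = dag mu).
  { unfold Xi; simpl. rewrite tenm_id, (idr _ mu) by ob. apply idr; ob. }
  assert (X21 : Xi A mu u 2 1 = mu).
  { unfold Xi; simpl. rewrite tenm_id, (idr _ mu) by ob. rewrite dag_id. apply idl; ob. }
  assert (X01 : Xi A mu u 0 1 = u).
  { unfold Xi; simpl. rewrite dag_id. apply idl; ob. }
  assert (X10 : Xi A mu u 1 0 = dag u).
  { unfold Xi; simpl. apply idr; ob. }
  unfold chan, bot, pure_classical_element, normalized in *.
  rewrite X12 in *. rewrite X21, X01, X10 in Hcompl.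
  set (t := top A) in *.
  assert (Hdt' : dom t = A) by apply Hdt.
  assert (Hct' : cod t = Iob C) by apply Hct.
  assert (HH : comp H H = idm A).
  { pose proof HU1 as h; rewrite HdagH, HdH in h; exact h. }
  rewrite Heta in Hsnake, HHeta.
  assert (F1 : comp (tenm mu (idm A)) (tenm (idm A) (dag mu)) = comp (dag mu) mu).
  { pose proof (f_equal (@dag C) Hfrob) as h.
    rewrite !dag_comp in h by ob. rewrite !dag_tenm, !dag_id, !dag_dag in h. exact h. }
  assert (Uu1 : comp (tenm (dag u) (idm A)) (dag mu) = idm A).
  { pose proof (f_equal (@dag C) Hunl) as h.
    rewrite !dag_comp in h by ob. rewrite !dag_tenm, !dag_id in h. exact h. }
  assert (Uu2 : comp (tenm (idm A) (dag u)) (dag mu) = idm A).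
  { pose proof (f_equal (@dag C) Hunr) as h.
    rewrite !dag_comp in h by ob. rewrite !dag_tenm, !dag_id in h. exact h. }
  assert (F2 : comp (tenm (comp (dag u) mu) (idm A)) (tenm (idm A) (dag mu)) = mu).
  { rewrite tc1 by ob. rewrite <- comp_assoc by ob. rewrite F1.
    rewrite comp_assoc by ob. rewrite Uu1. apply idl; ob. }
  assert (F3 : comp (tenm (idm A) (comp (dag u) mu)) (tenm (dag mu) (idm A)) = mu).
  { rewrite t1c by ob. rewrite <- comp_assoc by ob. rewrite Hfrob.
    rewrite comp_assoc by ob. rewrite Uu2. apply idl; ob. }
  assert (HTd : comp (comp (dag u) mu) (tenm H (idm A)) = comp (comp (dag u) mu) (tenm (idm A) H)).
  { pose proof (f_equal (@dag C) HHeta) as h.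
    rewrite !dag_comp in h by ob. rewrite !dag_tenm, !dag_id, !dag_dag, HdagH in h. 
    exact h. }
  assert (S1 : comp mu (tenm (idm A) H) = comp (tenm (idm A) (comp (dag u) mu)) (tenm (dag mu) H)).
  { transitivity (comp (comp (tenm (idm A) (comp (dag u) mu)) (tenm (dag mu) (idm A))) (tenm (idm A) H)).
    { rewrite F3. reflexivity. }
    rewrite <- comp_assoc by ob. f_equal. apply ichL; ob. }
  assert (Sa : comp H (tenm (idm A) (comp (dag u) mu))
               = comp (tenm (idm A) (comp (dag u) mu)) (tenm (tenm H (idm A)) (idm A))).
  { transitivity (tenm H (comp (dag u) mu)).
    { rewrite <- (ichL _ H (comp (dag u) mu) A (Iob C)) by ob. rewrite tenm_unitr. reflexivity. }
    rewrite tenm_assoc, tenm_id. symmetry; apply ichR; ob. }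
  assert (S2 : comp H (comp mu (tenm (idm A) H)) =
     comp (tenm (idm A) (comp (dag u) mu)) (tenm (comp (tenm H H) (dag mu)) (idm A))).
  { rewrite S1. rewrite comp_assoc by ob. rewrite Sa. rewrite <- comp_assoc by ob.
    rewrite <- tenm_comp by ob. rewrite (idl _ H) by ob.
    rewrite <- (ichR _ (comp (tenm H (idm A)) (dag mu)) H A (ten A A)) by ob.
    rewrite <- tenm_id, tenm_assoc. rewrite comp_assoc by ob.
    rewrite <- t1c by ob. rewrite <- HTd. rewrite t1c by ob.
    rewrite <- tenm_assoc. rewrite <- comp_assoc by ob. f_equal.
    rewrite <- tc1 by ob. f_equal. rewrite comp_assoc by ob. f_equal.
    apply ichR; ob. }
  assert (SZ : comp mu (comp (tenm H (idm A)) (comp (tenm mu (idm A))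
                 (tenm (idm A) (comp (tenm H (idm A)) (dag mu))))) = tenm (dag u) (idm A)).
  { rewrite t1c by ob. rewrite <- tenm_assoc.
    replace (comp (tenm H (idm A)) (comp (tenm mu (idm A)) (comp (tenm (tenm (idm A) H) (idm A)) (tenm (idm A) (dag mu)))))
      with (comp (tenm (comp H (comp mu (tenm (idm A) H))) (idm A)) (tenm (idm A) (dag mu)))
      by (rewrite !tc1 by ob; rewrite !comp_assoc by ob; reflexivity).
    rewrite S2. rewrite tc1 by ob.
    rewrite <- (comp_assoc (f:=tenm (idm A) (dag mu))) by ob.
    rewrite (tenm_assoc (comp (tenm H H) (dag mu))), tenm_id.
    rewrite (ichL _ (comp (tenm H H) (dag mu)) (dag mu) A (ten A A)) by ob.
    rewrite <- (ichR _ (comp (tenm H H) (dag mu)) (dag mu) A (ten A A)) by ob.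
    rewrite (comp_assoc (h:=tenm (tenm (idm A) (comp (dag u) mu)) (idm A))) by ob. rewrite tenm_assoc. rewrite <- tenm_id, tenm_assoc.
    rewrite <- t1c by ob. rewrite F2.
    rewrite comp_assoc by ob. rewrite <- Hassoc. rewrite <- comp_assoc by ob.
    rewrite <- tc1 by ob. rewrite Hcompl. rewrite tc1 by ob.
    rewrite comp_assoc by ob. rewrite Hunl. apply idl; ob. }
  assert (P1 : comp (tenm (dag mu) (idm A)) (tenm mu (idm A))
             = comp (tenm (idm A) (tenm mu (idm A))) (tenm (dag mu) (idm (ten A A)))).
  { rewrite <- tc1 by ob. rewrite <- Hfrob. rewrite tc1 by ob.
    rewrite !tenm_assoc, tenm_id. reflexivity. }
  assert (P2 : comp (tenm (dag mu) (idm (ten A A))) (comp (tenm (tenm (idm A) H) (idm A)) (tenm (idm A) (dag mu)))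
     = comp (tenm (idm A) (tenm (idm A) (tenm H (idm A)))) (comp (tenm (idm A) (tenm (idm A) (dag mu))) (tenm (dag mu) (idm A)))).
  { rewrite tenm_assoc. rewrite <- t1c by ob.
    rewrite (ichL _ (dag mu) (comp (tenm H (idm A)) (dag mu)) A (ten A A)) by ob.
    rewrite <- (ichR _ (dag mu) (comp (tenm H (idm A)) (dag mu)) A (ten A A)) by ob.
    rewrite <- tenm_id, tenm_assoc. rewrite !t1c by ob. rewrite comp_assoc by ob. reflexivity. }
  set (T1 := comp (tenm mu (idm A)) (comp (tenm (tenm (idm A) H) (idm A)) (tenm (idm A) (dag mu)))).
  assert (HdT1 : dom T1 = ten A A) by (unfold T1; ob).
  assert (HcT1 : cod T1 = ten A A) by (unfold T1; ob).
  assert (DT : dag T1 = comp (tenm (idm A) mu) (comp (tenm (tenm (idm A) H) (idm A)) (tenm (dag mu) (idm A)))).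
  { unfold T1. rewrite !dag_comp by ob. rewrite !dag_tenm, !dag_id, HdagH.
    rewrite dag_dag. rewrite comp_assoc by ob. reflexivity. }
  assert (UT : comp (dag T1) T1 = idm (ten A A)).
  { rewrite DT. unfold T1. rewrite <- !comp_assoc by ob.
    rewrite (rw2 _ _ _ _ _ P1) by ob.
    rewrite <- (comp_assoc (h:=tenm (idm A) (tenm mu (idm A)))) by ob.
    rewrite P2.
    transitivity (comp (tenm (idm A) (comp mu (comp (tenm H (idm A)) (comp (tenm mu (idm A))
                 (tenm (idm A) (comp (tenm H (idm A)) (dag mu))))))) (tenm (dag mu) (idm A))).
    { rewrite !t1c by ob. rewrite tenm_assoc. rewrite <- !comp_assoc by ob. reflexivity. }
    rewrite SZ. rewrite <- tenm_assoc. rewrite <- tc1 by ob. rewrite Uu2. apply tenm_id. }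
  assert (PT1 : pure T1).
  { unfold T1. repeat (first [apply Pcomp; [ob| |] | apply Pten | apply Pdag | apply Pid | assumption]). }
  assert (HT : comp (tenm t t) T1 = tenm t t).
  { replace (tenm t t) with (top (ten A A)) by (rewrite E2; reflexivity). transitivity (comp (top (ten A A)) (idm (ten A A))).
    - apply (E1 (ten A A) (ten A A)); [auto|auto|ob|ob|ob|ob|]. rewrite UT, dag_id. symmetry; apply idl; ob.
    - apply idr; ob. }
  clear E1.
  set (C0 := comp (tenm (idm A) t) (dag mu)).
  assert (HdC0 : dom C0 = A) by (unfold C0; ob).
  assert (HcC0 : cod C0 = A) by (unfold C0; ob).
  assert (Q1 : comp C0 (comp H C0) = comp (tenm (comp C0 H) t) (dag mu)).
  { rewrite <- (ichL _ (comp C0 H) t A (Iob C)) by ob. rewrite tenm_unitr.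
    unfold C0 at 2. rewrite !comp_assoc by ob. reflexivity. }
  assert (Q2 : comp (tenm (idm A) mu) (tenm (eta A) (idm A)) = dag mu).
  { rewrite Heta, tc1 by ob. rewrite comp_assoc by ob. rewrite Hfrob.
    rewrite <- comp_assoc by ob. rewrite Hunl. apply idr; ob. }
  assert (Q3 : comp (tenm (idm (ten A A)) H) (tenm (eta A) (idm A)) = comp (tenm (eta A) (idm A)) H).
  { rewrite (ichR _ (eta A) H A (ten A A)) by ob.
    rewrite <- (ichL _ (eta A) H (Iob C) A) by ob. rewrite tenm_unitl. reflexivity. }
  assert (Q4 : comp (tenm (idm A) (tenm (idm A) (dag mu))) (tenm (eta A) (idm A))
              = comp (tenm (tenm (eta A) (idm A)) (idm A)) (dag mu)).
  { rewrite <- tenm_assoc, tenm_id.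
    rewrite (ichR _ (eta A) (dag mu) A (ten A A)) by ob.
    rewrite <- (ichL _ (eta A) (dag mu) (Iob C) (ten A A)) by ob. rewrite tenm_unitl.
    rewrite <- tenm_id, tenm_assoc. reflexivity. }
  assert (Main : comp (tenm (idm A) (comp (tenm t t) T1)) (tenm (eta A) (idm A))
                 = comp (tenm (comp C0 H) t) (dag mu)).
  { unfold T1. rewrite !t1c by ob. rewrite <- !comp_assoc by ob.
    rewrite Q4. rewrite <- !tenm_assoc. rewrite tenm_id.
    try rewrite <- !comp_assoc by ob.
    replace (comp (tenm (tenm (idm A) mu) (idm A)) (comp (tenm (tenm (idm (ten A A)) H) (idm A)) (comp (tenm (tenm (eta A) (idm A)) (idm A)) (dag mu))))
      with (comp (tenm (comp (tenm (idm A) mu) (comp (tenm (idm (ten A A)) H) (tenm (eta A) (idm A)))) (idm A)) (dag mu))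
      by (rewrite !tc1 by ob; rewrite !comp_assoc by ob; reflexivity).
    rewrite Q3. rewrite (comp_assoc (h:=tenm (idm A) mu)) by ob. rewrite Q2.
    rewrite comp_assoc by ob. rewrite <- tenm_comp by ob. rewrite (idr _ t) by ob. unfold C0.
    rewrite comp_assoc by ob. reflexivity. }
  assert (II : comp C0 (comp H C0) = comp (dag t) t).
  { rewrite Q1, <- Main, HT.
    transitivity (tenm (comp (tenm (idm A) t) (eta A)) (comp t (idm A))).
    { rewrite tenm_comp by ob. rewrite tenm_assoc. reflexivity. }
    pose proof (E3 A) as e3. change (top A) with t in e3. rewrite e3.
    rewrite (idr _ t) by ob.
    rewrite <- (ichL _ (dag t) t (Iob C) (Iob C)) by ob. rewrite tenm_unitr, tenm_unitl. reflexivity. }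
  split; [|exact II].
  intros e [Pe [Hde0 [Hce0 Hcopy]]] Hnorm.
  assert (Ce : comp C0 e = e).
  { unfold C0. rewrite <- comp_assoc by ob. rewrite Hcopy. rewrite <- tenm_comp by ob.
    rewrite Hnorm, (idl _ e) by ob. apply tenm_unitr. }
  rewrite <- Ce. rewrite (comp_assoc (h:=H)) by ob. rewrite comp_assoc by ob. rewrite II.
  rewrite <- comp_assoc by ob. rewrite Hnorm. apply idr; ob.
Qed.
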